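(* Let $A$ and $B$ be 0-1 matrices of sizes $p\times q$ and $q\times r$ with $p\ge r$, and let $\ell\in[p]$. Let $T\subseteq\{0,1\}^q$ be a set of $\ell$ centers produced by a $2$-approximation algorithm for the $\ell$-center clustering of the rows of $A$, so that $\max_{i\in[p]}\min_{u\in T}\mathrm{ham}(A_{i*},u)\le 2\lambda(A,\ell,\mathrm{row})$. For each $i\in[p]$ let $cen_\ell(A_{i*})\in T$ be a center closest to $A_{i*}$ in Hamming distance (ties broken arbitrarily), and define $D_{ij}$, for $i\in[p]$, $j\in[r]$, to be the inner product of $cen_\ell(A_{i*})$ with the $j$-th column $B_{*j}$ of $B$. Let $C=AB$ be the arithmetic product. Then for all $1\le i\le p$ and $1\le j\le r$, $|C_{ij}-D_{ij}|\le 2\lambda(A,\ell,\mathrm{row})$.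
   Context: For a positive integer $r$, $[r]=\{1,\dots,r\}$. The arithmetic matrix product $C=AB$ has entries $C_{ij}=\sum_{h=1}^q A_{ih}B_{hj}$ (over the integers); the inner product of $a,b\in\{0,1\}^q$ is $\sum_h a_hb_h$. The Hamming distance $\mathrm{ham}(a,b)$ between $a,b\in\{0,1\}^q$ is the number of coordinates in which they differ. The $\ell$-center clustering problem for the rows of $A$ asks for a set $T$ of $\ell$ points of $\{0,1\}^q$ minimizing $\max_{i\in[p]}\min_{u\in T}\mathrm{ham}(A_{i*},u)$; this minimum value is denoted $\lambda(A,\ell,\mathrm{row})$, where $A_{i*}$ is the $i$-th row of $A$. *)

(* Defs.v *)
From HB Require Import structures.
From mathcomp Require Import all_boot all_order all_algebra.
Set Implicit Arguments. Unset Strict Implicit. Unset Printing Implicit Defensive.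
Import Order.TTheory GRing.Theory Num.Theory.

Definition ham q (a b : 'rV[bool]_q) : nat := #|[set k | a ord0 k != b ord0 k]|.

Definition inner q (a : 'rV[bool]_q) (b : 'cV[bool]_q) : nat :=
  \sum_(k < q) (a ord0 k : nat) * (b k ord0 : nat).

Definition intmx m n (A : 'M[bool]_(m, n)) : 'M[int]_(m, n) :=
  map_mx (fun b : bool => Posz (nat_of_bool b)) A.

Definition arith_prod p q r (A : 'M[bool]_(p, q)) (B : 'M[bool]_(q, r))
  : 'M[int]_(p, r) := intmx A *m intmx B.

Definition dist_to_set q (a : 'rV[bool]_q) (T : {set 'rV[bool]_q}) : nat :=
  \big[minn/q]_(u in T) ham a u.

Definition cluster_cost p q (A : 'M[bool]_(p, q)) (T : {set 'rV[bool]_q}) : nat :=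
  \max_(i < p) dist_to_set (row i A) T.

Definition lambda_row p q (A : 'M[bool]_(p, q)) (l : nat) : nat :=
  \big[minn/q]_(T : {set 'rV[bool]_q} | 0 < #|T| <= l) cluster_cost A T.

(* Main.v *)
Require Import Defs.
From HB Require Import structures.
From mathcomp Require Import all_boot all_order all_algebra.
Import Order.TTheory GRing.Theory Num.Theory.

Lemma key_bound q (a c : 'rV[bool]_q) (b : 'cV[bool]_q) :
  (`| \sum_(k < q) (Posz (a ord0 k) * Posz (b k ord0)) - (inner c b)%:Z | <= (ham a c)%:Z)%R.
Proof.
rewrite /inner /ham -sum1dep_card -!natz !natr_sum -sumrB.
apply: (le_trans (ler_norm_sum _ _ _)); rewrite [X in (_ <= X)%R]big_mkcond /=; apply: ler_sum => k _.
by case: (a ord0 k); case: (c ord0 k); case: (b k ord0).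
Qed.

Lemma ham_le q (a b : 'rV[bool]_q) : ham a b <= q.
Proof. by rewrite /ham; apply: leq_trans (max_card _) _; rewrite card_ord. Qed.

Theorem lemma1 (p q r : nat) (A : 'M[bool]_(p, q)) (B : 'M[bool]_(q, r))
  (l : nat) (T : {set 'rV[bool]_q}) (cen : 'I_p -> 'rV[bool]_q) :
  r <= p ->
  0 < l <= p ->
  0 < #|T| <= l ->
  cluster_cost A T <= 2 * lambda_row A l ->
  (forall i, cen i \in T) ->
  (forall i u, u \in T -> ham (row i A) (cen i) <= ham (row i A) u) ->
  forall (i : 'I_p) (j : 'I_r),
    (`| arith_prod A B i j - (inner (cen i) (col j B))%:Z | <=
       (2 * lambda_row A l)%:Z)%R.
Proof.
move=> _ _ _ Hc Hcen Hmin i j.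
have H1 : ham (row i A) (cen i) <= dist_to_set (row i A) T.
  rewrite /dist_to_set; apply: (big_ind (fun x => ham (row i A) (cen i) <= x)).
  - exact: ham_le.
  - by move=> x y hx hy; rewrite leq_min hx hy.
  - by move=> u uT; apply: Hmin.
have H2 : dist_to_set (row i A) T <= cluster_cost A T.
  by rewrite /cluster_cost; apply: (leq_bigmax i).
have := @key_bound _ (row i A) (cen i) (col j B).
have -> : (arith_prod A B i j = \sum_(k < q) (Posz (row i A ord0 k) * Posz (col j B k ord0)))%R.
  by rewrite /arith_prod /intmx !mxE; apply: eq_bigr => k _; rewrite !mxE.
move=> /le_trans; apply; rewrite lez_nat.
by apply: leq_trans Hc; apply: leq_trans H2.
Qed.
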